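(* Suppose $\mathcal E$ generates a stochastic process. Then for all $j,j'\in\{0,\dots,n_\tau\}$ with $j'\ge j$, all $x,x'\in\Lambda$ and all $h\in\mathbb R^{\{1,\dots,n_\tau\}\times\Lambda}$, $$\big|\mathcal C(h)_{(j,x),(j',x')}\big|\le\big|\mathcal C(0)_{(j,x),(j',x')}\big|=\big(e^{-(j'-j)\epsilon\mathcal E}\big)_{x,x'} .$$
   Context: $\Lambda$ is a finite discrete torus $\mathbb Z^d/L\mathbb Z^d$ (lattice spacing $1$), operators on $\mathbb C^\Lambda$ are identified with their matrices, and functions on $\Lambda$ act as multiplication operators. $\mathcal E$ is a hermitian operator on $\mathbb C^\Lambda$; it generates a stochastic process if $(e^{-\tau\mathcal E})_{x,y}\ge0$ for all $\tau\ge0$ and $x,y\in\Lambda$. $\beta>0$, $n_\tau\in\mathbb N$, $\epsilon=\beta/n_\tau$. For $h=(h_j)_{j=1}^{n_\tau}$, $h_j\in\mathbb R^\Lambda$, and $h_0:=0$, let $\mathcal Q(h)$ be the block matrix indexed by $j,j'\in\{0,\dots,n_\tau\}$ with $\mathcal Q(h)_{j,j'}=\delta_{j,j'}\mathbf 1-\delta_{j+1,j'}e^{-\epsilon\mathcal E}e^{i\sqrt\epsilon h_{j'}}$ (it is upper triangular with identity diagonal, hence invertible), and $\mathcal C(h)=\mathcal Q(h)^{-1}$ with matrix elements $\mathcal C(h)_{(j,x),(j',x')}$. *)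

(* Defs.v *)
From HB Require Import structures.
From mathcomp Require Import all_boot all_order all_algebra.
From mathcomp Require Import all_classical all_reals.
From mathcomp Require Import topology normedtype sequences exp trigo.
From mathcomp Require Import complex.
Set Implicit Arguments. Unset Strict Implicit. Unset Printing Implicit Defensive.
Import Order.TTheory GRing.Theory Num.Theory.
Import numFieldNormedType.Exports.
Local Open Scope ring_scope.
Local Open Scope complex_scope.

Section Defs.
Variable R : realType.
Local Notation C := R[i].

(** Operators on C^I (I a finite type) are represented as square matrices
    'M[C]_#|I|, the basis vector of x : I having index enum_rank x. *)
Definition opentry (I : finType) (A : 'M[C]_#|I|) (x y : I) : C :=
  A (enum_rank x) (enum_rank y).

Definition mkop (I : finType) (f : I -> I -> C) : 'M[C]_#|I| :=
  \matrix_(a, b) f (enum_val a) (enum_val b).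

Definition hermitian_mx n (A : 'M[C]_n) : Prop :=
  forall i j, A j i = (A i j)^*.

Definition expm_partial n (A : 'M[C]_n) (N : nat) : 'M[C]_n :=
  \sum_(k < N) ((k`!)%:R^-1 : C) *: A ^+ k.

Definition expm n (A : 'M[C]_n) : 'M[C]_n :=
  \matrix_(i, j)
    ((limn (fun N => complex.Re (expm_partial A N i j))) +i*
     (limn (fun N => complex.Im (expm_partial A N i j)))).

Definition semigroup n (E : 'M[C]_n) (tau : R) : 'M[C]_n :=
  expm (- (tau%:C) *: E).

(** E generates a stochastic process: all entries of e^{-tau E} are
    (real and) nonnegative for tau >= 0. *)
Definition generates_stochastic n (E : 'M[C]_n) : Prop :=
  forall tau : R, 0 <= tau -> forall i j, 0 <= semigroup E tau i j.

Definition expi (t : R) : C := cos t +i* sin t.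

End Defs.

(** The torus Lambda = Z^d / L Z^d, a point being a d-tuple of residues
    mod L represented in 'I_L. *)
Definition torus (d L : nat) : finType := {ffun 'I_d -> 'I_L}.

Definition tsidx (d L ntau : nat) : finType := ('I_ntau.+1 * torus d L)%type.

Section Q.
Variable R : realType.
Variables (d L ntau : nat) (beta : R).
Local Notation Lam := (torus d L).
Local Notation C := R[i].

Definition eps_step : R := beta / ntau%:R.

(** h_j for j in {0..n_tau}, h_0 := 0, from h : {1..n_tau} x Lambda -> R
    given as h : 'I_ntau -> Lam -> R with h_j = h (j-1). *)
Definition hj (h : 'I_ntau -> Lam -> R) (j : nat) (x : Lam) : R :=
  if j is k.+1 then
    (if insub k is Some k' then h k' x else 0) else 0.

Definition Qmat (E : 'M[C]_#|Lam|) (h : 'I_ntau -> Lam -> R) :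
    'M[C]_#|tsidx d L ntau| :=
  mkop (fun (jx jx' : tsidx d L ntau) =>
    let: (j, x) := jx in let: (j', x') := jx' in
    ((j == j') && (x == x'))%:R
    - ((j.+1 == j' :> nat))%:R * opentry (semigroup E eps_step) x x'
        * expi (Num.sqrt eps_step * hj h j' x')).

Definition Cmat (E : 'M[C]_#|Lam|) (h : 'I_ntau -> Lam -> R) :
    'M[C]_#|tsidx d L ntau| := invmx (Qmat E h).

End Q.

(* Main.v *)
Require Import Defs.
From HB Require Import structures.
From mathcomp Require Import all_boot all_order all_algebra.
From mathcomp Require Import all_classical all_reals.
From mathcomp Require Import topology normedtype sequences exp trigo.
From mathcomp Require Import complex.
Import Order.TTheory GRing.Theory Num.Theory.
Local Open Scope ring_scope.
Local Open Scope complex_scope.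
From mathcomp Require Import ring lra.
Set Implicit Arguments. Unset Strict Implicit. Unset Printing Implicit Defensive.

Lemma tri_sum (V : nmodType) (G : nat -> nat -> V) N :
  \sum_(m < N) \sum_(i < m.+1) G i (m - i)%N =
  \sum_(k < N) \sum_(0 <= l < N - k) G k l.
Proof.
elim: N => [|N IH]; first by rewrite !big_ord0.
rewrite big_ord_recr /= IH [RHS]big_ord_recr /= subSnn big_nat1.
have -> : \sum_(i < N.+1) G i (N - i)%N = \sum_(i < N) G i (N - i)%N + G N 0%N.
  by rewrite big_ord_recr /= subnn.
rewrite addrA; congr (_ + _).
rewrite -big_split /=; apply: eq_bigr => k _.
by rewrite subSn ?(ltnW (ltn_ord k)) // big_nat_recr.
Qed.

Lemma tri_sum2 (V : nmodType) (G : nat -> nat -> V) N :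
  \sum_(m < N) \sum_(i < m.+1) G i (m - i)%N =
  \sum_(k < N) \sum_(l < N | (k + l < N)%N) G k l.
Proof.
rewrite tri_sum; apply: eq_bigr => k _.
rewrite -(big_mkord (fun l => k + l < N)%N (fun l => G k l)) (big_nat_widen _ _ _ _ _ (leq_subr k N)).
by apply: eq_bigl => l; rewrite ltn_subRL.
Qed.

Section Alg.
Variables (K : numFieldType) (A : algType K).
Definition fc (k : nat) : K := (k`!%:R)^-1.
Definition psum (N : nat) (x : A) : A := \sum_(k < N) fc k *: x ^+ k.

Lemma fc_bin m i : (i <= m)%N -> fc m * 'C(m, i)%:R = fc i * fc (m - i).
Proof.
move=> him; rewrite /fc -(bin_fact him) !natrM.
have h1 : ('C(m, i)%:R : K) != 0 by rewrite pnatr_eq0 -lt0n bin_gt0.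
have h2 : (i`!%:R : K) != 0 by rewrite pnatr_eq0 -lt0n fact_gt0.
have h3 : ((m - i)`!%:R : K) != 0 by rewrite pnatr_eq0 -lt0n fact_gt0.
by field; rewrite h1 h2 h3.
Qed.

Lemma psumM x y N : GRing.comm x y ->
  psum N x * psum N y - psum N (x + y) =
  \sum_(k < N) \sum_(l < N | (N <= k + l)%N) (fc k * fc l) *: (x ^+ k * y ^+ l).
Proof.
move=> cxy.
have E1 : psum N x * psum N y =
    \sum_(k < N) \sum_(l < N) (fc k * fc l) *: (x ^+ k * y ^+ l).
  rewrite /psum mulr_suml; apply: eq_bigr => k _; rewrite mulr_sumr.
  by apply: eq_bigr => l _; rewrite -scalerAl -scalerAr scalerA.
have E2 : psum N (x + y) =
    \sum_(k < N) \sum_(l < N | (k + l < N)%N) (fc k * fc l) *: (x ^+ k * y ^+ l).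
  rewrite /psum -(tri_sum2 (fun k l => (fc k * fc l) *: (x ^+ k * y ^+ l))).
  apply: eq_bigr => m _.
  rewrite addrC exprDn_comm; last by [].
  rewrite scaler_sumr; apply: eq_bigr => i _.
  have him : (i <= m)%N by rewrite -ltnS.
  rewrite -scaler_nat scalerA -[X in X *: _]mulrC mulrC fc_bin //.
  suff -> : y ^+ (m - i) * x ^+ i = x ^+ i * y ^+ (m - i) by [].
  by apply/esym/commrX/commr_sym/commrX.
rewrite E1 E2 -sumrB; apply: eq_bigr => k _.
rewrite (bigID (fun l : 'I_N => (N <= k + l)%N)) /=.
under [X in _ + X - _]eq_bigl do rewrite -ltnNge.
by rewrite addrK.
Qed.
End Alg.
Import numFieldNormedType.Exports.
Local Open Scope classical_set_scope.
Notation Rp := complex.Re.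
Notation Ip := complex.Im.

Section Cplx.
Variable R : realType.
Local Notation C := R[i].

Definition nrm (z : C) : R := `|Rp z| + `|Ip z|.

Lemma ReD (z w : C) : Rp (z + w) = Rp z + Rp w. Proof. by case: z; case: w. Qed.
Lemma ImD (z w : C) : Ip (z + w) = Ip z + Ip w. Proof. by case: z; case: w. Qed.
Lemma ReN (z : C) : Rp (- z) = - Rp z. Proof. by case: z. Qed.
Lemma ImN (z : C) : Ip (- z) = - Ip z. Proof. by case: z. Qed.
Lemma ReM (z w : C) : Rp (z * w) = Rp z * Rp w - Ip z * Ip w.
Proof. by case: z; case: w. Qed.
Lemma ImM (z w : C) : Ip (z * w) = Rp z * Ip w + Ip z * Rp w.
Proof. by case: z => a b; case: w => c d /=; rewrite addrC. Qed.
Lemma ReRM (r : R) (z : C) : Rp (r%:C * z) = r * Rp z.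
Proof. by case: z => a b /=; rewrite mul0r subr0. Qed.
Lemma ImRM (r : R) (z : C) : Ip (r%:C * z) = r * Ip z.
Proof. by case: z => a b /=; rewrite mul0r addr0. Qed.

Lemma nrm_ge0 z : 0 <= nrm z. Proof. by rewrite /nrm addr_ge0. Qed.
Lemma nrmD z w : nrm (z + w) <= nrm z + nrm w.
Proof.
rewrite /nrm ReD ImD.
rewrite (le_trans (lerD (ler_normD _ _) (ler_normD _ _))) //.
by rewrite addrACA.
Qed.
Lemma nrmN z : nrm (- z) = nrm z. Proof. by rewrite /nrm ReN ImN !normrN. Qed.
Lemma nrmM z w : nrm (z * w) <= nrm z * nrm w.
Proof.
rewrite /nrm ReM ImM.
apply: (le_trans (lerD (ler_normB _ _) (ler_normD _ _))).
rewrite !normrM mulrDl !mulrDr; lra.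
Qed.
Lemma nrmRM (r : R) z : nrm (r%:C * z) = `|r| * nrm z.
Proof. by rewrite /nrm ReRM ImRM !normrM mulrDr. Qed.
Lemma Re_nrm z : `|Rp z| <= nrm z.
Proof. by rewrite /nrm lerDl. Qed.
Lemma Im_nrm z : `|Ip z| <= nrm z.
Proof. by rewrite /nrm lerDr. Qed.
Lemma nrm_sum (I : Type) (r : seq I) (P : pred I) (F : I -> C) :
  nrm (\sum_(i <- r | P i) F i) <= \sum_(i <- r | P i) nrm (F i).
Proof.
apply: (big_ind2 (fun a b => nrm a <= b)).
- by rewrite /nrm /= normr0 addr0.
- by move=> a b c d h1 h2; apply: (le_trans (nrmD _ _)); apply: lerD.
- by [].
Qed.

Definition ccvg (f : nat -> C) (l : C) :=
  (fun n => Rp (f n)) @ \oo --> Rp l /\ (fun n => Ip (f n)) @ \oo --> Ip l.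

Lemma ccvg_ext f g l : (forall n, f n = g n) -> ccvg f l -> ccvg g l.
Proof. by move=> e; have -> : f = g by apply: funext. Qed.

Lemma ccvg_uniq f l l' : ccvg f l -> ccvg f l' -> l = l'.
Proof.
move=> [h1 h2] [h3 h4]; have e1 := cvg_unique (@Rhausdorff R) h1 h3.
have e2 := cvg_unique (@Rhausdorff R) h2 h4.
by move: e1 e2; clear; case: l => a b; case: l' => a' b' /= -> ->.
Qed.

Lemma ccvg_cst l : ccvg (fun _ => l) l.
Proof. by split; apply: cvg_cst. Qed.

Lemma ccvgD f g l m : ccvg f l -> ccvg g m -> ccvg (fun n => f n + g n) (l + m).
Proof.
move=> [h1 h2] [h3 h4]; split.
  under eq_fun do rewrite ReD. by rewrite ReD; apply: cvgD.
under eq_fun do rewrite ImD. by rewrite ImD; apply: cvgD.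
Qed.

Lemma ccvgM f g l m : ccvg f l -> ccvg g m -> ccvg (fun n => f n * g n) (l * m).
Proof.
move=> [h1 h2] [h3 h4]; split.
  under eq_fun do rewrite ReM. by rewrite ReM; apply: cvgB; apply: cvgM.
under eq_fun do rewrite ImM. by rewrite ImM; apply: cvgD; apply: cvgM.
Qed.

Lemma ccvg_sum (I : Type) (r : seq I) (F : I -> nat -> C) (L : I -> C) :
  (forall i, ccvg (F i) (L i)) ->
  ccvg (fun n => \sum_(i <- r) F i n) (\sum_(i <- r) L i).
Proof.
move=> h; elim: r => [|a r IH].
  by rewrite big_nil; apply: (ccvg_ext (f := fun _ => 0)) => [n|]; rewrite ?big_nil //; apply: ccvg_cst.
rewrite big_cons; apply: (ccvg_ext (f := fun n => F a n + \sum_(i <- r) F i n)).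
  by move=> n; rewrite big_cons.
by apply: ccvgD.
Qed.

Lemma ccvg_near f g l (e : nat -> R) : ccvg f l -> e @ \oo --> 0 ->
  (forall n, nrm (g n - f n) <= e n) -> ccvg g l.
Proof.
move=> hf he hb.
have sq : forall u : nat -> R, (forall n, `|u n| <= e n) -> u @ \oo --> 0.
  move=> u hu; apply: (squeeze_cvgr (f := fun n => - e n) (h := e)).
  - by near=> n; rewrite -ler_norml hu.
  - by rewrite -oppr0; apply: cvgN.
  - exact: he.
apply: (ccvg_ext (f := fun n => f n + (g n - f n))) => [n|]; first by rewrite addrC subrK.
rewrite -[l]addr0; apply: ccvgD => //; split.
  by apply: sq => n; exact: le_trans (Re_nrm _) (hb n).
by apply: sq => n; exact: le_trans (Im_nrm _) (hb n).
Unshelve. all: by end_near.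
Qed.
End Cplx.

Section Mx.
Variable R : realType.
Local Notation C := R[i].

Definition nmat n (A : 'M[C]_n) : R := \sum_i \sum_j nrm (A i j).

Lemma nmat_ge0 n (A : 'M[C]_n) : 0 <= nmat A.
Proof. by apply: sumr_ge0 => i _; apply: sumr_ge0 => j _; apply: nrm_ge0. Qed.

Lemma row_le n (A : 'M[C]_n) m : \sum_j nrm (A m j) <= nmat A.
Proof.
rewrite /nmat [leRHS](bigD1 m) //= lerDl; apply: sumr_ge0 => i _.
by apply: sumr_ge0 => j _; apply: nrm_ge0.
Qed.

Lemma nrm_entry n (A : 'M[C]_n) i j : nrm (A i j) <= nmat A.
Proof.
apply: le_trans (row_le A i); rewrite [leRHS](bigD1 j) //= lerDl.
by apply: sumr_ge0 => k _; apply: nrm_ge0.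
Qed.

Lemma nmat_mul n (A B : 'M[C]_n) : nmat (A *m B) <= nmat A * nmat B.
Proof.
rewrite /nmat.
apply: (@le_trans _ _ (\sum_i \sum_j \sum_m nrm (A i m) * nrm (B m j))).
  apply: ler_sum => i _; apply: ler_sum => j _; rewrite mxE.
  apply: le_trans (nrm_sum _ _ _) _; apply: ler_sum => m _; exact: nrmM.
rewrite mulr_suml; apply: ler_sum => i _.
rewrite exchange_big /= mulr_suml; apply: ler_sum => m _.
rewrite -mulr_sumr; apply: ler_wpM2l; first exact: nrm_ge0.
exact: row_le.
Qed.

Lemma nrm_nat (b : bool) : nrm (b%:R : C) = b%:R.
Proof. by case: b; rewrite /nrm /= ?normr0 ?normr1 ?addr0. Qed.

Lemma nmat1 n : nmat (1%:M : 'M[C]_n) = n%:R.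
Proof.
rewrite /nmat -[n in RHS]card_ord -sumr_const; apply: eq_bigr => i _.
rewrite (bigD1 i) //= big1 => [|j /negbTE ji]; rewrite mxE.
  by rewrite eqxx nrm_nat addr0.
by rewrite eq_sym ji nrm_nat.
Qed.

Lemma nmatX n (A : 'M[C]_n) k : nmat (A ^+ k) <= n%:R * nmat A ^+ k.
Proof.
elim: k => [|k IH]; first by rewrite !expr0 mulr1 nmat1.
rewrite exprSr -mulmxE; apply: le_trans (nmat_mul _ _) _.
rewrite exprSr mulrA; apply: ler_wpM2r => //; exact: nmat_ge0.
Qed.

Lemma cfact k : ((k`!%:R)^-1 : C) = ((k`!%:R)^-1 : R)%:C.
Proof. by rewrite fmorphV rmorph_nat. Qed.

Lemma expm_part_cvg n (A : 'M[C]_n) i j (p : C -> R) :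
  (forall z w, p (z + w) = p z + p w) -> p 0 = 0 ->
  (forall r z, p (r%:C * z) = r * p z) -> (forall z, `|p z| <= nrm z) ->
  cvgn (fun N => p (expm_partial A N i j)).
Proof.
move=> pD p0 pR pn.
set t := fun k => ((k`!%:R)^-1 : R) * p ((A ^+ k) i j).
have -> : (fun N => p (expm_partial A N i j)) = series t.
  apply: funext => N; rewrite /series /= /expm_partial summxE big_mkord.
  rewrite (big_morph p pD p0); apply: eq_bigr => k _.
  by rewrite mxE cfact pR.
apply: normed_cvg.
set a := nmat A.
apply: (@series_le_cvg _ _ (fun k => n%:R * exp_coeff a k)).
- by move=> k; apply: normr_ge0.
- move=> k; apply: mulr_ge0 => //; apply: exp_coeff_ge0; exact: nmat_ge0.
- move=> k; rewrite /t /exp_coeff /= normrM ger0_norm ?invr_ge0 //.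
  rewrite mulrC mulrA; apply: ler_wpM2r; first by rewrite invr_ge0.
  apply: le_trans (pn _) _; apply: le_trans (nrm_entry _ _ _) _; exact: nmatX.
- have -> : series (fun k => n%:R * exp_coeff a k) = (fun N => n%:R * series (exp_coeff a) N).
    by apply: funext => N; rewrite /series /= mulr_sumr.
  apply: is_cvgMr; exact: is_cvg_series_exp_coeff.
Qed.

Lemma expm_cvg n (A : 'M[C]_n) i j :
  ccvg (fun N => expm_partial A N i j) (expm A i j).
Proof.
rewrite /expm mxE; split => /=.
  exact: (@expm_part_cvg n A i j (@complex.Re R) (@ReD R) (erefl _) (@ReRM R) (@Re_nrm R)).
exact: (@expm_part_cvg n A i j (@complex.Im R) (@ImD R) (erefl _) (@ImRM R) (@Im_nrm R)).
Qed.
End Mx.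

Section ExpmD.
Variable R : realType.
Local Notation C := R[i].

Lemma psum_series (a : R) N : @psum R R^o N a = series (exp_coeff a) N.
Proof.
rewrite /psum /series /exp_coeff /= big_mkord; apply: eq_bigr => k _.
by rewrite /fc mulrC.
Qed.

Lemma psum_cvg (a : R) : (fun N => @psum R R^o N a) @ \oo --> expR a.
Proof.
have -> : (fun N => @psum R R^o N a) = series (exp_coeff a).
  by apply: funext => N; rewrite psum_series.
exact: is_cvg_series_exp_coeff.
Qed.

Lemma prod_cvg n (X Y : 'M[C]_n) i j :
  ccvg (fun N => (expm_partial X N *m expm_partial Y N) i j) ((expm X *m expm Y) i j).
Proof.
rewrite mxE; apply: (ccvg_ext (f := fun N => \sum_k expm_partial X N i k * expm_partial Y N k j)).
  by move=> N; rewrite mxE.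
apply: ccvg_sum => k; apply: ccvgM; exact: expm_cvg.
Qed.

Lemma expmD n (X Y : 'M[C]_n) : X *m Y = Y *m X -> expm (X + Y) = expm X *m expm Y.
Proof.
case: n X Y => [|n] X Y cXY; first by rewrite [LHS]flatmx0 [RHS]flatmx0.
apply/matrixP => i j.
apply: (ccvg_uniq (expm_cvg (X + Y) i j)).
set a := nmat X; set b := nmat Y.
set c := (n.+1%:R : R) ^+ 2.
set e := fun N => c * (@psum R R^o N a * @psum R R^o N b - @psum R R^o N (a + b)).
apply: (ccvg_near (f := fun N => (expm_partial X N *m expm_partial Y N) i j) (e := e)).
- exact: prod_cvg.
- have L : e @ \oo --> c * (expR a * expR b - expR (a + b)).
    apply: cvgMr; apply: cvgB; last exact: psum_cvg.
    by apply: cvgM; exact: psum_cvg.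
  by rewrite expRD subrr mulr0 in L.
- move=> N.
  have EM : expm_partial X N *m expm_partial Y N - expm_partial (X + Y) N =
     \sum_(k < N) \sum_(l < N | (N <= k + l)%N) (fc C k * fc C l) *: (X ^+ k * Y ^+ l).
    by rewrite mulmxE -psumM.
  have ER : @psum R R^o N a * @psum R R^o N b - @psum R R^o N (a + b) =
     \sum_(k < N) \sum_(l < N | (N <= k + l)%N) (fc R k * fc R l) * (a ^+ k * b ^+ l).
    by rewrite (@psumM R R^o) //; exact: mulrC.
  rewrite /e ER.
  have -> : expm_partial (X + Y) N i j - (expm_partial X N *m expm_partial Y N) i j
    = - (expm_partial X N *m expm_partial Y N - expm_partial (X + Y) N) i j.
    by rewrite !mxE opprD opprK addrC.
  rewrite EM nrmN summxE; apply: le_trans (nrm_sum _ _ _) _.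
  rewrite mulr_sumr; apply: ler_sum => k _.
  rewrite summxE; apply: le_trans (nrm_sum _ _ _) _.
  rewrite mulr_sumr; apply: ler_sum => l _.
  rewrite mxE /fc !cfact -rmorphM nrmRM ger0_norm; last by rewrite mulr_ge0 // invr_ge0.
  rewrite mulrCA; apply: ler_wpM2l; first by rewrite mulr_ge0 // invr_ge0.
  apply: le_trans (nrm_entry _ _ _) _; rewrite -mulmxE.
  apply: le_trans (nmat_mul _ _) _.
  have -> : c * (a ^+ k * b ^+ l) = (n.+1%:R * a ^+ k) * (n.+1%:R * b ^+ l).
    by rewrite /c; ring.
  apply: ler_pM; [exact: nmat_ge0 | exact: nmat_ge0 | exact: nmatX | exact: nmatX].
Qed.
End ExpmD.

Section Expm0.
Variable R : realType.
Local Notation C := R[i].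

Lemma expm0 n : expm (0 : 'M[C]_n) = 1%:M.
Proof.
apply/matrixP => i j.
apply: (ccvg_uniq (expm_cvg 0 i j)).
apply: (ccvg_near (f := fun _ => (1%:M : 'M[C]_n) i j) (e := fun N => (N == 0)%N%:R)).
- exact: ccvg_cst.
- apply: cvg_near_cst; exists 1%N => // N /= hN.
  by case: N hN.
- case => [|N] /=.
    rewrite /expm_partial big_ord0 mxE add0r nrmN mxE; case: (i == j); rewrite nrm_nat //.
  rewrite /expm_partial big_ord_recl /= big1 => [|k _]; last first.
    by rewrite expr0n /= scaler0.
  by rewrite addr0 expr0 /fc /= invr1 scale1r subrr /nrm /= normr0 addr0.
Qed.
End Expm0.

Section Op.
Variable R : realType.
Local Notation C := R[i].

Lemma opentry_eq (I : finType) (A B : 'M[C]_#|I|) :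
  (forall a b, opentry A a b = opentry B a b) -> A = B.
Proof.
move=> h; apply/matrixP => i j.
by rewrite -(enum_valK i) -(enum_valK j); apply: h.
Qed.

Lemma opentry_mul (I : finType) (A B : 'M[C]_#|I|) a b :
  opentry (A *m B) a b = \sum_c opentry A a c * opentry B c b.
Proof.
rewrite /opentry mxE (reindex (@enum_rank I)) //.
exact: onW_bij (enum_rank_bij I).
Qed.

Lemma opentry_mkop (I : finType) (f : I -> I -> C) a b : opentry (mkop f) a b = f a b.
Proof. by rewrite /opentry /mkop mxE !enum_rankK. Qed.

Lemma opentry1 (I : finType) a b : opentry (1%:M : 'M[C]_#|I|) a b = (a == b)%:R.
Proof. by rewrite /opentry mxE (inj_eq enum_rank_inj). Qed.

Lemma opentry_sum (I : finType) m (F : nat -> 'M[C]_#|I|) a b :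
  opentry (\sum_(k < m) F k) a b = \sum_(k < m) opentry (F k) a b.
Proof. by rewrite /opentry summxE. Qed.

Lemma opentryB (I : finType) (A B : 'M[C]_#|I|) a b :
  opentry (A - B) a b = opentry A a b - opentry B a b.
Proof. by rewrite /opentry !mxE. Qed.

Lemma opentry0 (I : finType) a b : opentry (0 : 'M[C]_#|I|) a b = 0.
Proof. by rewrite /opentry mxE. Qed.

Lemma norm_expi (t : R) : `|expi t| = 1.
Proof. by rewrite normc_def /= cos2Dsin2 sqrtr1. Qed.

Lemma expi0 : expi (0 : R) = 1.
Proof. by rewrite /expi cos0 sin0. Qed.

Lemma semigroup_pow n (E : 'M[C]_n) (t : R) m :
  semigroup E (m%:R * t) = semigroup E t ^+ m.
Proof.
elim: m => [|m IH].
  by rewrite mul0r expr0 /semigroup rmorph0 oppr0 scale0r expm0.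
rewrite exprSr -IH -mulmxE /semigroup -expmD.
  by rewrite -scalerDl -opprD -rmorphD mulrSr mulrDl mul1r.
by rewrite -!scalemxAl -!scalemxAr !scalerA mulrC.
Qed.
End Op.

Section Main.
Variable R : realType.
Local Notation C := R[i].
Variables (d L ntau : nat) (beta : R) (E : 'M[C]_#|torus d L|).
Local Notation T := (tsidx d L ntau).
Local Notation Lam := (torus d L).
Local Notation S := (semigroup E (eps_step ntau beta)).

Definition Nm (h : 'I_ntau -> Lam -> R) : 'M[C]_#|T| :=
  mkop (fun (jx jx' : T) =>
    let: (j, x) := jx in let: (j', x') := jx' in
    ((j.+1 == j' :> nat))%:R * opentry S x x'
        * expi (Num.sqrt (eps_step ntau beta) * hj h j' x')).

Lemma Q_eq h : Qmat beta E h = 1%:M - Nm h.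
Proof.
apply: opentry_eq => -[j x] [j' x'].
by rewrite opentryB opentry1 !opentry_mkop xpair_eqE.
Qed.

Lemma Npow_zero h k (a b : T) : (b.1 : nat) != (a.1 + k)%N -> opentry (Nm h ^+ k) a b = 0.
Proof.
elim: k a b => [|k IH] a b hb.
  rewrite expr0 opentry1; case: eqP => // eab; move: hb; by rewrite eab addn0 eqxx.
rewrite exprSr -mulmxE opentry_mul big1 // => c _.
have [e|ne] := eqVneq (c.1 : nat) (a.1 + k)%N; last by rewrite IH ?mul0r.
case: c e => j2 y /= e; case: b hb => j' x' /= hb.
rewrite /Nm opentry_mkop.
suff -> : (j2.+1 == j' :> nat) = false by rewrite !mul0r mulr0.
by apply/negbTE; move: hb; rewrite e addnS eq_sym.
Qed.

Lemma Npow_nil h : Nm h ^+ ntau.+1 = 0.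
Proof.
apply: opentry_eq => a b; rewrite opentry0 Npow_zero //.
rewrite neq_ltn; apply/orP; left.
by apply: (leq_trans (ltn_ord b.1)); rewrite leq_addl.
Qed.

Lemma C_eq h : Cmat beta E h = \sum_(k < ntau.+1) Nm h ^+ k.
Proof.
have QS : Qmat beta E h *m \sum_(k < ntau.+1) Nm h ^+ k = 1%:M.
  have := subrX1 (Nm h) ntau.+1.
  rewrite Npow_nil sub0r Q_eq mulmxE => e.
  by rewrite -opprB mulNr -e opprK.
have [U _] := mulmx1_unit QS.
by rewrite /Cmat -[RHS]mul1mx -(mulVmx U) -mulmxA QS mulmx1.
Qed.
End Main.

Section Main2.
Variable R : realType.
Local Notation C := R[i].
Variables (d L ntau : nat) (beta : R) (E : 'M[C]_#|torus d L|).
Local Notation T := (tsidx d L ntau).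
Local Notation Lam := (torus d L).
Local Notation S := (semigroup E (eps_step ntau beta)).
Hypothesis S0 : forall x x', 0 <= opentry S x x'.
Local Notation N0 := (Nm beta E (fun _ _ => 0)).

Lemma hj0 j x : hj (fun (_ : 'I_ntau) (_ : Lam) => (0 : R)) j x = 0.
Proof. by rewrite /hj; case: j => // k; case: insub. Qed.

Lemma Nabs h (a b : T) : `|opentry (Nm beta E h) a b| = opentry N0 a b.
Proof.
case: a => j x; case: b => j' x'.
rewrite /Nm !opentry_mkop !normrM normr_nat norm_expi mulr1 ger0_norm //.
by rewrite hj0 mulr0 expi0 mulr1.
Qed.

Lemma Npow_bound h k (a b : T) :
  `|opentry (Nm beta E h ^+ k) a b| <= opentry (N0 ^+ k) a b.
Proof.
elim: k a b => [|k IH] a b; first by rewrite !expr0 opentry1 normr_nat.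
rewrite !exprSr -!mulmxE !opentry_mul.
apply: le_trans (ler_norm_sum _ _ _) _; apply: ler_sum => c _.
rewrite normrM Nabs; apply: ler_pM; [exact: normr_ge0 | by rewrite -(Nabs h) | exact: IH | by []].
Qed.

Lemma N0pow k (a b : T) :
  opentry (N0 ^+ k) a b = ((b.1 : nat) == (a.1 + k)%N)%:R * opentry (S ^+ k) a.2 b.2.
Proof.
elim: k a b => [|k IH] [j x] [j' x'] /=.
  rewrite !expr0 !opentry1 xpair_eqE addn0 -mulnb natrM; congr (_ * _).
  by rewrite eq_sym.
rewrite exprSr -mulmxE opentry_mul [S ^+ k.+1]exprSr -mulmxE opentry_mul.
have [hk|hk] := ltnP (j + k)%N ntau.+1; last first.
  have -> : (j' == (j + k.+1)%N :> nat) = false.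
    apply/negbTE; rewrite neq_ltn; apply/orP; left.
    rewrite addnS ltnS; apply: (leq_trans _ hk); exact: ltnW (ltn_ord j').
  rewrite mul0r big1 // => -[j2 y] _; rewrite IH /=.
  suff -> : (j2 == (j + k)%N :> nat) = false by rewrite !mul0r.
  apply/negbTE; rewrite neq_ltn; apply/orP; left.
  exact: (leq_trans (ltn_ord j2)).
set o : 'I_ntau.+1 := Ordinal hk.
have PB : forall F : T -> C, \sum_(c : T) F c = \sum_(j2 : 'I_ntau.+1) \sum_(y : Lam) F (j2, y).
  by move=> F; rewrite pair_bigA; apply: eq_bigr => -[].
rewrite PB.
rewrite (bigD1 o) //= [X in _ + X]big1 => [|j2 ne]; last first.
  apply: big1 => y _; rewrite IH /=.
  suff -> : (j2 == (j + k)%N :> nat) = false by rewrite !mul0r.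
  by apply/negbTE; apply: contra ne => /eqP e; apply/eqP/val_inj.
rewrite addr0 mulr_sumr; apply: eq_bigr => y _.
rewrite IH /= eqxx mul1r /Nm opentry_mkop hj0 mulr0 expi0 mulr1 /= addnS.
by rewrite eq_sym mulrCA.
Qed.
End Main2.

Unset Implicit Arguments.
Local Close Scope classical_set_scope.

Theorem lemma6p1 (R : realType) (d L ntau : nat) (beta : R)
    (E : 'M[complex R]_#|torus d L|) :
  (0 < L)%N -> (0 < ntau)%N -> 0 < beta ->
  hermitian_mx E -> generates_stochastic E ->
  forall (j j' : 'I_ntau.+1) (x x' : torus d L)
         (h : 'I_ntau -> torus d L -> R),
    (j <= j')%N ->
    `| opentry (Cmat beta E h) (j, x) (j', x') |
      <= `| opentry (Cmat beta E (fun _ _ => 0)) (j, x) (j', x') |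
    /\ opentry (Cmat beta E (fun _ _ => 0)) (j, x) (j', x')
       = opentry (semigroup E ((j' - j)%N%:R * eps_step ntau beta)) x x'.
Proof.
move=> _ _ hb _ hst j j' x x' h hjj.
have S0 : forall a b, 0 <= opentry (semigroup E (eps_step ntau beta)) a b.
  move=> a b; apply: hst; rewrite /eps_step divr_ge0 //; exact: ltW.
have B : `| opentry (Cmat beta E h) (j, x) (j', x') | <=
         opentry (Cmat beta E (fun _ _ => 0)) (j, x) (j', x').
  rewrite !C_eq !opentry_sum; apply: le_trans (ler_norm_sum _ _ _) _.
  by apply: ler_sum => k _; apply: Npow_bound.
split.
  rewrite [X in _ <= X]ger0_norm //; exact: le_trans (normr_ge0 _) B.
rewrite C_eq opentry_sum semigroup_pow.
have hk : (j' - j < ntau.+1)%N by apply: leq_ltn_trans (leq_subr _ _) (ltn_ord j').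
rewrite (bigD1 (Ordinal hk)) //= big1 => [|k ne]; last first.
  rewrite N0pow /=; case: eqP => [e|]; last by rewrite mul0r.
  by move: ne; rewrite (_ : k = Ordinal hk) ?eqxx //; apply/val_inj; rewrite /= e addKn.
by rewrite N0pow /= subnKC // eqxx mul1r addr0.
Qed.
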